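(* Let $S$ be a skew lattice that is a strong distributive solution of the Yang–Baxter equation. Then (i) the lattice $S/\mathcal{D}$ is also a strong distributive solution, and (ii) $S$ is quasi-distributive, i.e. $S/\mathcal{D}$ is a distributive lattice.
   Context: A skew lattice is a set $S$ with two binary operations $\wedge,\vee$, each idempotent and associative, satisfying the absorption laws $x\wedge(x\vee y)=x=x\vee(x\wedge y)$ and $(x\wedge y)\vee y=y=(x\vee y)\wedge y$ for all $x,y\in S$. On a skew lattice, $x\,\mathcal{D}\,y$ means $x\wedge y\wedge x=x$ and $y\wedge x\wedge y=y$; $\mathcal{D}$ is a congruence and $S/\mathcal{D}$ is a lattice (the maximal lattice image). A map $r:X\times X\to X\times X$ is a set-theoretic solution of the Yang–Baxter equation if $(r\times\mathrm{id})\circ(\mathrm{id}\times r)\circ(r\times\mathrm{id})=(\mathrm{id}\times r)\circ(r\times\mathrm{id})\circ(\mathrm{id}\times r)$. A skew lattice $S$ is a strong distributive solution if the map $r(x,y)=(x\wedge y,x\vee y)$ on $S\times S$ is a set-theoretic solution of the Yang–Baxter equation. *)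

(* Defs.v *)
Set Implicit Arguments.

Record skew_lattice (S : Type) (meet join : S -> S -> S) : Prop := {
  sl_meet_idem : forall x, meet x x = x;
  sl_join_idem : forall x, join x x = x;
  sl_meet_assoc : forall x y z, meet x (meet y z) = meet (meet x y) z;
  sl_join_assoc : forall x y z, join x (join y z) = join (join x y) z;
  sl_abs1 : forall x y, meet x (join x y) = x;
  sl_abs2 : forall x y, join x (meet x y) = x;
  sl_abs3 : forall x y, join (meet x y) y = y;
  sl_abs4 : forall x y, meet (join x y) y = y
}.

Definition r12 {X} (r : X * X -> X * X) (t : X * X * X) : X * X * X :=
  let '(a, b, c) := t in let '(a', b') := r (a, b) in (a', b', c).
Definition r23 {X} (r : X * X -> X * X) (t : X * X * X) : X * X * X :=
  let '(a, b, c) := t in let '(b', c') := r (b, c) in (a, b', c').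

Definition is_YBE_solution {X} (r : X * X -> X * X) : Prop :=
  forall t, r12 r (r23 r (r12 r t)) = r23 r (r12 r (r23 r t)).

Definition skew_r {S} (meet join : S -> S -> S) (p : S * S) : S * S :=
  (meet (fst p) (snd p), join (fst p) (snd p)).

Definition strong_distributive_solution {S} (meet join : S -> S -> S) : Prop :=
  is_YBE_solution (skew_r meet join).

Definition skewD {S} (meet : S -> S -> S) (x y : S) : Prop :=
  meet (meet x y) x = x /\ meet (meet y x) y = y.

(* The quotient S/D is represented by S with equality replaced by D
   (D is a congruence, so the induced operations are well defined).
   Componentwise D-equivalence of triples: *)
Definition D3 {S} (meet : S -> S -> S) (t u : S * S * S) : Prop :=
  let '(a, b, c) := t in let '(a', b', c') := u in
  skewD meet a a' /\ skewD meet b b' /\ skewD meet c c'.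

Definition quotient_strong_distributive_solution {S} (meet join : S -> S -> S)
  : Prop :=
  forall t, D3 meet (r12 (skew_r meet join) (r23 (skew_r meet join)
                          (r12 (skew_r meet join) t)))
                    (r23 (skew_r meet join) (r12 (skew_r meet join)
                          (r23 (skew_r meet join) t))).

Definition quasi_distributive {S} (meet join : S -> S -> S) : Prop :=
  forall x y z, skewD meet (meet x (join y z)) (join (meet x y) (meet x z)).

(* Main.v *)
Require Import Defs.
From Stdlib Require Import List.
Import ListNotations.

Definition fo {S} (f : S -> S -> S) (a b : option S) : option S :=
  match a, b with
  | None, _ => b
  | _, None => a
  | Some x, Some y => Some (f x y)
  end.

Definition ev {S} (f : S -> S -> S) (l : list S) : option S :=
  fold_right (fun a acc => fo f (Some a) acc) None l.

Lemma fo_assoc {S} (f : S -> S -> S)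
  (A : forall x y z, f x (f y z) = f (f x y) z) a b c :
  fo f a (fo f b c) = fo f (fo f a b) c.
Proof. destruct a, b, c; simpl; try reflexivity; now rewrite A. Qed.

Lemma ev_app {S} (f : S -> S -> S)
  (A : forall x y z, f x (f y z) = f (f x y) z) l1 l2 :
  ev f (l1 ++ l2) = fo f (ev f l1) (ev f l2).
Proof.
  induction l1 as [|a l IH].
  - simpl. destruct (ev f l2); reflexivity.
  - change (fo f (Some a) (ev f (l++l2)) = fo f (fo f (Some a) (ev f l)) (ev f l2)).
    rewrite IH. apply fo_assoc; auto.
Qed.

Lemma stp {S} (f : S -> S -> S)
  (A : forall x y z, f x (f y z) = f (f x y) z) p u v s :
  ev f u = ev f v -> ev f (p ++ u ++ s) = ev f (p ++ v ++ s).
Proof. intro H. rewrite !ev_app by auto. now rewrite H. Qed.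

Lemma ev_sq {S} (f : S -> S -> S)
  (A : forall x y z, f x (f y z) = f (f x y) z) (I : forall x, f x x = x) u :
  ev f (u ++ u) = ev f u.
Proof. rewrite ev_app by auto. destruct (ev f u) as [s|]; simpl; [rewrite I|]; reflexivity. Qed.

Lemma band_trans {S} (f : S -> S -> S)
  (A : forall x y z, f x (f y z) = f (f x y) z) (I : forall x, f x x = x) x y z :
  f (f x y) x = x -> f (f y z) y = y -> f (f x z) x = x.
Proof.
  intros H1 H2.
  assert (E1 : ev f [x;y;x] = ev f [x]) by (simpl; rewrite A; congruence).
  assert (E2 : ev f [y;z;y] = ev f [y]) by (simpl; rewrite A; congruence).
  assert (St := stp f A). assert (Sq := ev_sq f A I).
  assert (G : ev f [x;z;x] = ev f [x]).
  { transitivity (ev f [x;y;x;z;x]). { symmetry; exact (St [] _ _ [z;x] E1). }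
    transitivity (ev f [x;y;z;y;x;z;x]). { symmetry; exact (St [x] _ _ [x;z;x] E2). }
    transitivity (ev f [x;y;z;x;y;z;y;x;z;x]).
    { symmetry; exact (St [] [x;y;z;x;y;z] [x;y;z] [y;x;z;x] (Sq [x;y;z])). }
    transitivity (ev f [x;y;z;x;y;x;z;x]). { exact (St [x;y;z;x] _ _ [x;z;x] E2). }
    transitivity (ev f [x;y;z;x;y;x;z;x;y;x]). { symmetry; exact (St [x;y;z;x;y;x;z] _ _ [] E1). }
    transitivity (ev f [x;y;z;x;y;x]).
    { exact (St [x;y] [z;x;y;x;z;x;y;x] [z;x;y;x] [] (Sq [z;x;y;x])). }
    transitivity (ev f [x;y;z;x;y;z;y;x]). { symmetry; exact (St [x;y;z;x] _ _ [x] E2). }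
    transitivity (ev f [x;y;z;y;x]).
    { exact (St [] [x;y;z;x;y;z] [x;y;z] [y;x] (Sq [x;y;z])). }
    transitivity (ev f [x;y;x]). { exact (St [x] _ _ [x] E2). }
    exact E1. }
  simpl in G. rewrite <- A. congruence.
Qed.

Lemma band_glb {S} (f : S -> S -> S)
  (A : forall x y z, f x (f y z) = f (f x y) z) (I : forall x, f x x = x) x y z :
  f (f z x) z = z -> f (f z y) z = z -> f (f z (f x y)) z = z.
Proof.
  intros H1 H2.
  assert (E1 : ev f [z;x;z] = ev f [z]) by (simpl; rewrite A; congruence).
  assert (E2 : ev f [z;y;z] = ev f [z]) by (simpl; rewrite A; congruence).
  assert (St := stp f A). assert (Sq := ev_sq f A I).
  assert (G : ev f [z;x;y;z] = ev f [z]).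
  { transitivity (ev f [z;x;y;z;x;z]). { symmetry; exact (St [z;x;y] _ _ [] E1). }
    transitivity (ev f [z;y;z;x;y;z;x;z]). { symmetry; exact (St [] _ _ [x;y;z;x;z] E2). }
    transitivity (ev f [z;y;z;x;z]).
    { exact (St [z] [y;z;x;y;z;x] [y;z;x] [z] (Sq [y;z;x])). }
    transitivity (ev f [z;y;z]). { exact (St [z;y] _ _ [] E1). }
    exact E2. }
  simpl in G. rewrite <- !A. congruence.
Qed.

Definition le {S} (meet : S -> S -> S) x y := meet (meet x y) x = x.

Lemma L1 {S} (meet join : S -> S -> S) (H : skew_lattice meet join) x y :
  le meet y x -> join (join x y) x = x.
Proof.
  destruct H as [mi ji ma ja a1 a2 a3 a4]. unfold le. intro Hy.
  assert (E : join y (meet x y) = meet x y).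
  { rewrite <- Hy at 1. rewrite <- ma. apply a3. }
  assert (Ex : x = join x (join y (meet x y))) by (rewrite E; now rewrite a2).
  rewrite Ex at 2. rewrite (ja x y (meet x y)), ja, ji, <- ja. congruence.
Qed.

Lemma sl_dual {S} (meet join : S -> S -> S) :
  skew_lattice meet join -> skew_lattice join meet.
Proof. intros []; constructor; auto. Qed.

Lemma L2 {S} (meet join : S -> S -> S) (H : skew_lattice meet join) x y :
  join (join y x) y = y -> le meet x y.
Proof. intro Hj. exact (L1 join meet (sl_dual _ _ H) x y Hj). Qed.


Lemma mainTheorem5_aux (S : Type) (meet join : S -> S -> S) :
  skew_lattice meet join ->
  (forall a b c, join (meet a b) (meet (join a b) c) =
                 meet (join a (meet b c)) (join b c)) ->
  quasi_distributive meet join.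
Proof.
  intros H E.
  pose proof H as [mi ji ma ja a1 a2 a3 a4].
  assert (tr : forall x y z, le meet x y -> le meet y z -> le meet x z).
  { intros x y z; apply band_trans; auto. }
  assert (ml : forall x y, le meet (meet x y) x).
  { intros x y; unfold le. rewrite <- !ma, (ma x x y), mi, (ma x y (meet x y)), mi. reflexivity. }
  assert (mr : forall x y, le meet (meet x y) y).
  { intros x y; unfold le. rewrite <- (ma x y y), !mi. reflexivity. }
  assert (glb : forall x y z, le meet z x -> le meet z y -> le meet z (meet x y)).
  { intros x y z; apply band_glb; auto. }
  assert (ul : forall x y, le meet x (join x y)).
  { intros x y; apply (L2 meet join H).
    rewrite <- !ja, (ja x x y), ji, (ja x y (join x y)), ji. reflexivity. }
  assert (ur : forall x y, le meet y (join x y)).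
  { intros x y; apply (L2 meet join H). rewrite <- (ja x y y), !ji. reflexivity. }
  assert (lub : forall x y z, le meet x z -> le meet y z -> le meet (join x y) z).
  { intros x y z hx hy. apply (L2 meet join H).
    apply band_glb; auto; apply (L1 meet join H); auto. }
  assert (ineq : forall a b c, le meet (meet (join a b) c) (join a (meet b c))).
  { intros a b c. apply tr with (join (meet a b) (meet (join a b) c)); [apply ur|].
    rewrite E. apply ml. }
  intros x y z. split.
  -
    fold (le meet (meet x (join y z)) (join (meet x y) (meet x z))).
    apply tr with (meet (join y (meet z x)) x).
    { apply glb; [|apply ml]. apply tr with (meet (join y z) x).
      - apply glb; [apply mr|apply ml].
      - apply ineq. }
    apply tr with (meet (join (meet z x) y) x).
    { apply glb; [|apply mr]. apply tr with (join y (meet z x)); [apply ml|].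
      apply lub; [apply ur|apply ul]. }
    apply tr with (join (meet z x) (meet y x)); [apply ineq|].
    apply lub.
    + apply tr with (meet x z); [apply glb; [apply mr|apply ml]|apply ur].
    + apply tr with (meet x y); [apply glb; [apply mr|apply ml]|apply ul].
  - fold (le meet (join (meet x y) (meet x z)) (meet x (join y z))).
    apply lub; apply glb.
    + apply ml.
    + apply tr with y; [apply mr|apply ul].
    + apply ml.
    + apply tr with z; [apply mr|apply ur].
Qed.

Theorem mainTheorem5 (S : Type) (meet join : S -> S -> S) :
  skew_lattice meet join ->
  strong_distributive_solution meet join ->
  quotient_strong_distributive_solution meet join /\ quasi_distributive meet join.
Proof.
  intros H Y. split.
  - intro t. rewrite (Y t).
    destruct (r23 _ _) as [[a b] c]. destruct H as [mi _ _ _ _ _ _ _].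
    simpl. unfold skewD. rewrite !mi. tauto.
  - apply mainTheorem5_aux; auto.
    intros a b c. specialize (Y (a, b, c)).
    unfold r12, r23, skew_r in Y. simpl in Y. congruence.
Qed.
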